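(* For every $v\in\{0,\dots,n-1\}$, every $\pi\in\Pi$ and every $f\in\mathcal F$, $$\sum_{e\in\mathcal E_v^+}\sigma_e H_e(f,\pi)\le -V^+_v(f,\pi)+V^-_v(f,\pi).$$
   Context: $\mathcal G=(\mathcal V,\mathcal E)$ is a finite directed graph with $\mathcal V=\{0,1,\dots,n\}$, containing no directed cycle, in which node $0$ is the unique node with no incoming link, node $n$ is the unique node with no outgoing link, there is a directed path from every node to $n$, and every link $(u,v)\in\mathcal E$ satisfies $u<v$. For $v\in\mathcal V$, $\mathcal E_v^-$ and $\mathcal E_v^+$ are the sets of links entering and leaving $v$. Each link $e$ has a capacity $C_e\in(0,+\infty]$; $\mathcal F_v:=\prod_{e\in\mathcal E_v^+}[0,C_e)$, $\mathcal F:=\prod_{e\in\mathcal E}[0,C_e)$. $\mathcal P$ is the set of directed paths from $0$ to $n$, $A$ the link-path incidence matrix ($A_{ep}=1$ iff $e\in p$), $\mathcal S(\cdot)$ denotes a probability simplex, $\Pi:=\{\pi\in\mathcal S(\mathcal P):(A\pi)_e<C_e\ \forall e\}$, and $f^\pi:=A\pi$. For each $v\in\{0,\dots,n-1\}$ a continuously differentiable $G^v:\mathcal F_v\times\Pi\to\mathcal S(\mathcal E_v^+)$ is given such that (consistency) $(\sum_{j\in\mathcal E_v^+}f^\pi_j)\,G^v_e(f^\pi_{\mathcal E_v^+},\pi)=f^\pi_e$ for all $\pi\in\Pi$, $e\in\mathcal E_v^+$, where $f^\pi_{\mathcal E_v^+}=(f^\pi_j)_{j\in\mathcal E_v^+}$;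 and (cooperativity) $\partial G^v_j(f_{\mathcal E_v^+},\pi)/\partial f_e\ge0$ for all $\pi\in\Pi$, $f_{\mathcal E_v^+}\in\mathcal F_v$, $j\neq e\in\mathcal E_v^+$. For $f\in\mathcal F$, $\pi\in\Pi$, $e\in\mathcal E_v^+$: $H_e(f,\pi):=G^v_e(f_{\mathcal E_v^+},\pi)-f_e$ if $v=0$, and $H_e(f,\pi):=(\sum_{j\in\mathcal E_v^-}f_j)G^v_e(f_{\mathcal E_v^+},\pi)-f_e$ if $1\le v<n$. Notation: $\sigma_e:=\mathrm{sgn}(f_e-f^\pi_e)$ with $\mathrm{sgn}(0)=0$; $\lambda^\pi_v:=\sum_{e\in\mathcal E_v^+}f^\pi_e$; $\lambda^-_v:=\sum_{e\in\mathcal E_v^-}f_e$; $V^+_v(f,\pi):=\sum_{e\in\mathcal E_v^+}|f_e-f^\pi_e|$; $V^-_v(f,\pi):=|\lambda^\pi_v-\lambda^-_v|$ for $1\le v\le n$ and $V^-_0(f,\pi):=0$. *)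

(* Defs.v *)
From Stdlib Require Import Reals List Lra.
Import ListNotations.
Open Scope R_scope.

(* Nodes are natural numbers 0..n; a link is a pair (tail, head). *)
Definition edge := (nat * nat)%type.
Definition path := list edge.

Definition sumR {A : Type} (l : list A) (g : A -> R) : R :=
  fold_right (fun a acc => g a + acc) 0 l.

Definition edge_eqb (e e' : edge) : bool :=
  Nat.eqb (fst e) (fst e') && Nat.eqb (snd e) (snd e').

Definition out_edges (E : list edge) (v : nat) : list edge :=
  filter (fun e => Nat.eqb (fst e) v) E.
Definition in_edges (E : list edge) (v : nat) : list edge :=
  filter (fun e => Nat.eqb (snd e) v) E.

Inductive dpath (E : list edge) : nat -> nat -> path -> Prop :=
| dp_nil : forall u, dpath E u u nil
| dp_cons : forall u w x p, In (u, w) E -> dpath E w x p -> dpath E u x ((u, w) :: p).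

Definition network (n : nat) (E : list edge) : Prop :=
  NoDup E /\
  (forall u v, In (u, v) E -> (u < v)%nat /\ (v <= n)%nat) /\
  (forall v, (1 <= v <= n)%nat -> exists u, In (u, v) E) /\
  (forall v, (v < n)%nat -> exists w, In (v, w) E) /\
  (forall v, (v <= n)%nat -> exists p, dpath E v n p).

(* Capacities in (0, +oo]; None encodes +oo. *)
Definition below_cap (x : R) (c : option R) : Prop :=
  match c with Some c => x < c | None => True end.
Definition cap_pos (E : list edge) (C : edge -> option R) : Prop :=
  forall e, In e E -> match C e with Some c => 0 < c | None => True end.

Definition paths_enum (n : nat) (E : list edge) (Ps : list path) : Prop :=
  NoDup Ps /\ forall p, In p Ps <-> dpath E 0 n p.

Definition flow (Ps : list path) (pi : path -> R) (e : edge) : R :=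
  sumR Ps (fun p => if existsb (edge_eqb e) p then pi p else 0).

Definition in_Pi (E : list edge) (C : edge -> option R) (Ps : list path)
    (pi : path -> R) : Prop :=
  (forall p, ~ In p Ps -> pi p = 0) /\
  (forall p, In p Ps -> 0 <= pi p) /\
  sumR Ps pi = 1 /\
  (forall e, In e E -> below_cap (flow Ps pi e) (C e)).

(* f in F_v and f in F (only the values on the relevant links matter) *)
Definition in_Fv (E : list edge) (C : edge -> option R) (v : nat) (f : edge -> R) : Prop :=
  forall e, In e (out_edges E v) -> 0 <= f e /\ below_cap (f e) (C e).
Definition in_F (E : list edge) (C : edge -> option R) (f : edge -> R) : Prop :=
  forall e, In e E -> 0 <= f e /\ below_cap (f e) (C e).

(* ---------- the maps G^v : F_v x Pi -> S(E_v^+) ----------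
   G v f pi e  stands for  G^v_e(f_{E_v^+}, pi). *)
Definition Gmap := nat -> (edge -> R) -> (path -> R) -> edge -> R.

Definition G_local (n : nat) (E : list edge) (G : Gmap) : Prop :=
  forall v, (v < n)%nat -> forall f g pi,
    (forall e, In e (out_edges E v) -> f e = g e) ->
    forall j, G v f pi j = G v g pi j.

Definition G_simplex (n : nat) (E : list edge) (C : edge -> option R)
    (Ps : list path) (G : Gmap) : Prop :=
  forall v, (v < n)%nat -> forall f pi, in_Fv E C v f -> in_Pi E C Ps pi ->
    (forall e, In e (out_edges E v) -> 0 <= G v f pi e) /\
    sumR (out_edges E v) (G v f pi) = 1.

Definition G_consistent (n : nat) (E : list edge) (C : edge -> option R)
    (Ps : list path) (G : Gmap) : Prop :=
  forall v, (v < n)%nat -> forall pi, in_Pi E C Ps pi ->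
    forall e, In e (out_edges E v) ->
      sumR (out_edges E v) (flow Ps pi) * G v (flow Ps pi) pi e = flow Ps pi e.

(* Continuous differentiability of a scalar map phi(f_{Ev}, pi_{Ps}) on a
   (not necessarily open) domain D, in the Frechet sense relative to D, with
   continuous derivative coefficients da (w.r.t. f_e) and db (w.r.t. pi_p). *)
Definition dist (Ev : list edge) (Ps : list path) (f : edge -> R) (pi : path -> R)
    (f' : edge -> R) (pi' : path -> R) : R :=
  sumR Ev (fun e => Rabs (f' e - f e)) + sumR Ps (fun p => Rabs (pi' p - pi p)).

Definition lin (Ev : list edge) (Ps : list path) (a : edge -> R) (b : path -> R)
    (f : edge -> R) (pi : path -> R) (f' : edge -> R) (pi' : path -> R) : R :=
  sumR Ev (fun e => a e * (f' e - f e)) + sumR Ps (fun p => b p * (pi' p - pi p)).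

Definition C1_on (Ev : list edge) (Ps : list path)
    (D : (edge -> R) -> (path -> R) -> Prop)
    (phi : (edge -> R) -> (path -> R) -> R)
    (da : (edge -> R) -> (path -> R) -> edge -> R)
    (db : (edge -> R) -> (path -> R) -> path -> R) : Prop :=
  (forall f pi, D f pi -> forall eps, 0 < eps -> exists delta, 0 < delta /\
     forall f' pi', D f' pi' -> dist Ev Ps f pi f' pi' < delta ->
       Rabs (phi f' pi' - phi f pi - lin Ev Ps (da f pi) (db f pi) f pi f' pi')
         <= eps * dist Ev Ps f pi f' pi') /\
  (forall f pi, D f pi -> forall eps, 0 < eps -> exists delta, 0 < delta /\
     forall f' pi', D f' pi' -> dist Ev Ps f pi f' pi' < delta ->
       (forall e, In e Ev -> Rabs (da f' pi' e - da f pi e) < eps) /\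
       (forall p, In p Ps -> Rabs (db f' pi' p - db f pi p) < eps)).

Definition G_C1_coop (n : nat) (E : list edge) (C : edge -> option R)
    (Ps : list path) (G : Gmap) : Prop :=
  forall v, (v < n)%nat ->
    exists (da : edge -> (edge -> R) -> (path -> R) -> edge -> R)
           (db : edge -> (edge -> R) -> (path -> R) -> path -> R),
      (forall j, In j (out_edges E v) ->
         C1_on (out_edges E v) Ps (fun f pi => in_Fv E C v f /\ in_Pi E C Ps pi)
               (fun f pi => G v f pi j) (da j) (db j)) /\
      (forall j e, In j (out_edges E v) -> In e (out_edges E v) -> j <> e ->
         forall f pi, in_Fv E C v f -> in_Pi E C Ps pi -> 0 <= da j f pi e).

Definition H (E : list edge) (G : Gmap) (v : nat) (f : edge -> R) (pi : path -> R)
    (e : edge) : R :=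
  if Nat.eqb v 0 then G v f pi e - f e
  else sumR (in_edges E v) f * G v f pi e - f e.

Definition sgn (x : R) : R :=
  if Rlt_dec 0 x then 1 else if Rlt_dec x 0 then -1 else 0.

Definition Vplus (E : list edge) (Ps : list path) (v : nat) (f : edge -> R)
    (pi : path -> R) : R :=
  sumR (out_edges E v) (fun e => Rabs (f e - flow Ps pi e)).

Definition Vminus (E : list edge) (Ps : list path) (v : nat) (f : edge -> R)
    (pi : path -> R) : R :=
  if Nat.eqb v 0 then 0
  else Rabs (sumR (out_edges E v) (flow Ps pi) - sumR (in_edges E v) f).

(* Main.v *)
Require Import Defs.
From Stdlib Require Import Reals List Lra Lia Classical.
Import ListNotations.
Import Defs.
Open Scope R_scope.

Lemma sumR_cons {A} (a : A) l g : sumR (a :: l) g = g a + sumR l g.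
Proof. reflexivity. Qed.
Lemma sumR_nil {A} g : sumR (@nil A) g = 0.
Proof. reflexivity. Qed.

Lemma sumR_plus {A} (l : list A) g h : sumR l (fun a => g a + h a) = sumR l g + sumR l h.
Proof. induction l; simpl; [lra|]. unfold sumR in *; simpl. rewrite IHl. lra. Qed.
Lemma sumR_scal {A} (l : list A) c g : sumR l (fun a => c * g a) = c * sumR l g.
Proof. induction l; simpl; [unfold sumR; simpl; lra|]. unfold sumR in *; simpl. rewrite IHl. lra. Qed.
Lemma sumR_minus {A} (l : list A) g h : sumR l (fun a => g a - h a) = sumR l g - sumR l h.
Proof. induction l; [unfold sumR; simpl; lra|]. rewrite !sumR_cons, IHl. lra. Qed.
Lemma sumR_ext_in {A} (l : list A) g h : (forall a, In a l -> g a = h a) -> sumR l g = sumR l h.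
Proof. induction l; intros H; [reflexivity|]. rewrite !sumR_cons, IHl, (H a); simpl; auto. intros; apply H; simpl; auto. Qed.
Lemma sumR_le_in {A} (l : list A) g h : (forall a, In a l -> g a <= h a) -> sumR l g <= sumR l h.
Proof. induction l; intros H; [unfold sumR; simpl; lra|]. rewrite !sumR_cons.
  assert (g a <= h a) by (apply H; simpl; auto).
  assert (sumR l g <= sumR l h) by (apply IHl; intros; apply H; simpl; auto). lra. Qed.
Lemma sumR_abs {A} (l : list A) g : Rabs (sumR l g) <= sumR l (fun a => Rabs (g a)).
Proof. induction l; [unfold sumR; simpl; rewrite Rabs_R0; lra|]. rewrite !sumR_cons.
  eapply Rle_trans; [apply Rabs_triang|]. lra. Qed.
Lemma sumR_const {A} (l : list A) c : sumR l (fun _ => c) = INR (length l) * c.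
Proof. induction l; [unfold sumR; simpl; lra|]. rewrite sumR_cons, IHl. simpl length.
  rewrite S_INR. lra. Qed.
Lemma sumR_zero {A} (l : list A) : sumR l (fun _ => 0) = 0.
Proof. rewrite sumR_const. lra. Qed.
Lemma sumR_swap {A B} (l1 : list A) (l2 : list B) h :
  sumR l1 (fun a => sumR l2 (fun b => h a b)) = sumR l2 (fun b => sumR l1 (fun a => h a b)).
Proof. induction l1.
  - rewrite sumR_nil. symmetry. rewrite (sumR_ext_in _ _ (fun _ => 0)) by reflexivity. apply (sumR_zero l2).
  - rewrite sumR_cons, IHl1. rewrite <- sumR_plus. apply sumR_ext_in. intros. reflexivity. Qed.
Lemma sumR_nonneg {A} (l : list A) g : (forall a, In a l -> 0 <= g a) -> 0 <= sumR l g.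
Proof. intros H. rewrite <- (sumR_zero l). apply sumR_le_in. auto. Qed.

Lemma edge_eqb_spec e e' : edge_eqb e e' = true <-> e = e'.
Proof. destruct e as [a b], e' as [c d]; unfold edge_eqb; simpl.
  rewrite Bool.andb_true_iff, !Nat.eqb_eq. split; [intros [-> ->]; auto| intros H; inversion H; auto]. Qed.

Lemma sumR_single (l : list edge) e c : NoDup l -> In e l ->
  sumR l (fun x => if edge_eqb x e then c else 0) = c.
Proof. induction l as [|a l IH]; intros Hn Hi; [destruct Hi|]. inversion Hn; subst.
  rewrite sumR_cons. destruct (edge_eqb a e) eqn:E.
  - apply edge_eqb_spec in E; subst. rewrite (sumR_ext_in _ _ (fun _ => 0)). rewrite sumR_zero; lra.
    intros x Hx. destruct (edge_eqb x e) eqn:E'; auto. apply edge_eqb_spec in E'; subst; contradiction.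
  - destruct Hi as [Hi|Hi]. subst. assert (edge_eqb e e = true) by (apply edge_eqb_spec; auto). congruence.
    rewrite IH; auto; lra. Qed.

Lemma sgn_mul x : sgn x * x = Rabs x.
Proof. unfold sgn. destruct (Rlt_dec 0 x). rewrite Rabs_right; lra.
  destruct (Rlt_dec x 0). rewrite Rabs_left; lra. assert (x = 0) by lra. subst; rewrite Rabs_R0; lra. Qed.
Lemma sgn_abs x : Rabs (sgn x) <= 1.
Proof. unfold sgn. destruct (Rlt_dec 0 x). rewrite Rabs_right; lra.
  destruct (Rlt_dec x 0). rewrite Rabs_left; lra. rewrite Rabs_R0; lra. Qed.
Lemma sgn_sq x : x <> 0 -> sgn x * sgn x = 1.
Proof. intros. unfold sgn. destruct (Rlt_dec 0 x). lra. destruct (Rlt_dec x 0). lra. lra. Qed.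
Lemma sgn_dec x : x = Rabs x * sgn x.
Proof. unfold sgn. destruct (Rlt_dec 0 x). rewrite Rabs_right; lra.
  destruct (Rlt_dec x 0). rewrite Rabs_left; lra. assert (x = 0) by lra. subst; rewrite Rabs_R0; lra. Qed.
Lemma sgn_bounds x : -1 <= sgn x <= 1.
Proof. unfold sgn. destruct (Rlt_dec 0 x). lra. destruct (Rlt_dec x 0); lra. Qed.

Lemma fin_delta {A} (l : list A) (Q : A -> R -> Prop) :
  (forall a d d', 0 < d' <= d -> Q a d -> Q a d') ->
  (forall a, In a l -> exists d, 0 < d /\ Q a d) ->
  exists d, 0 < d /\ forall a, In a l -> Q a d.
Proof. intros Hm. induction l as [|a l IH]; intros H.
  - exists 1. split; [lra| intros a []].
  - destruct (H a) as [d1 [Hd1 Q1]]; [simpl; auto|].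
    destruct IH as [d2 [Hd2 Q2]]; [intros; apply H; simpl; auto|].
    exists (Rmin d1 d2). split. apply Rmin_glb_lt; auto.
    intros b [<-|Hb]. eapply Hm; [|exact Q1]. split; [apply Rmin_glb_lt; auto| apply Rmin_l].
    eapply Hm; [|apply Q2; exact Hb]. split; [apply Rmin_glb_lt; auto| apply Rmin_r]. Qed.

Lemma creep (phi : R -> R) :
  (forall t, 0 <= t <= 1 -> forall eps, 0 < eps -> exists del, 0 < del /\
     forall s, 0 <= s <= 1 -> Rabs (s - t) < del ->
       (t <= s -> phi s <= phi t + eps * (s - t)) /\ (s <= t -> phi t <= phi s + eps * (t - s))) ->
  phi 1 <= phi 0.
Proof.
  intros H.
  assert (K : forall eps, 0 < eps -> phi 1 <= phi 0 + eps).
  { intros eps He.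
    set (S := fun t => 0 <= t <= 1 /\ forall u, 0 <= u <= t -> phi u <= phi 0 + eps * u).
    assert (Hb : bound S) by (exists 1; intros x [Hx _]; lra).
    assert (Hne : exists x, S x).
    { exists 0. split. lra. intros u Hu. assert (u = 0) by lra. subst. lra. }
    destruct (completeness S Hb Hne) as [m [Hub Hlub]].
    assert (Hm0 : 0 <= m) by (destruct Hne as [x Hx]; pose proof (Hub x Hx); destruct Hx; lra).
    assert (Hm1 : m <= 1) by (apply Hlub; intros x [Hx _]; lra).
    assert (Hclose : forall b, b < m -> exists t, S t /\ b < t).
    { intros b Hbm. apply NNPP. intro Hn. assert (m <= b); [|lra]. apply Hlub. intros x Hx.
      apply Rnot_lt_le. intro. apply Hn. exists x; auto. }
    destruct (H m (conj Hm0 Hm1) eps He) as [del [Hdel Hd]].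
    assert (HSm : S m).
    { split. lra. intros u Hu. destruct (Rlt_dec u m) as [Hlt|Hge].
      - destruct (Hclose u Hlt) as [t [[Ht Ht2] Hut]]. apply Ht2. lra.
      - assert (u = m) by lra. subst u.
        destruct (Hclose (m - del)) as [t [[Ht Ht2] Hut]]. lra.
        pose proof (Hub t (conj Ht Ht2)).
        destruct (Hd t) as [_ H2]. lra. rewrite Rabs_left1; lra.
        pose proof (H2 H0). pose proof (Ht2 t (conj (proj1 Ht) (Rle_refl t))). nra. }
    destruct (Rlt_dec m 1) as [Hlt|Hge].
    - set (s := Rmin 1 (m + del / 2)).
      assert (Hs1 : s <= 1) by apply Rmin_l.
      assert (Hs2 : s <= m + del/2) by apply Rmin_r.
      assert (Hs3 : m < s) by (apply Rmin_glb_lt; lra).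
      assert (S s).
      { split. lra. intros u Hu. destruct (Rle_dec u m). apply (proj2 HSm). lra.
        destruct (Hd u) as [H1 _]. lra. rewrite Rabs_right; lra.
        pose proof (H1 ltac:(lra)). pose proof (proj2 HSm m (conj Hm0 (Rle_refl m))). nra. }
      pose proof (Hub s H0). lra.
    - assert (m = 1) by lra. subst. destruct HSm as [_ HS]. pose proof (HS 1 ltac:(lra)). lra. }
  apply Rnot_lt_le. intro Hc. pose proof (K ((phi 1 - phi 0)/2) ltac:(lra)). lra.
Qed.

Lemma dpath_tail n E u x p : network n E -> dpath E u x p -> forall e, In e p -> (u <= fst e)%nat.
Proof. intros Hn Hd. induction Hd; intros e He; [destruct He|].
  destruct He as [<-|He]; simpl; [lia|]. pose proof (IHHd e He).
  destruct Hn as [_ [Hlt _]]. destruct (Hlt u w H). lia. Qed.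

Lemma out0_sum n E C Ps pi : network n E -> (0 < n)%nat -> paths_enum n E Ps -> in_Pi E C Ps pi ->
  sumR (out_edges E 0) (flow Ps pi) = 1.
Proof.
  intros Hn Hn0 [_ HP] [_ [_ [Hs _]]]. rewrite <- Hs. unfold flow. rewrite sumR_swap.
  apply sumR_ext_in. intros p Hp. apply HP in Hp.
  inversion Hp; subst. lia.
  rewrite (sumR_ext_in _ _ (fun e => if edge_eqb e (0%nat, w) then pi ((0%nat, w) :: p0) else 0)).
  apply sumR_single. apply NoDup_filter. apply (proj1 Hn).
  unfold out_edges. apply filter_In. split; auto.
  intros e He. unfold out_edges in He. apply filter_In in He. destruct He as [_ He].
  apply Nat.eqb_eq in He. simpl existsb. destruct (edge_eqb e (0%nat, w)) eqn:Eq; simpl; auto.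
  destruct (existsb (edge_eqb e) p0) eqn:Ex; auto. apply existsb_exists in Ex.
  destruct Ex as [e' [He' Heq]]. apply edge_eqb_spec in Heq. subst e'.
  pose proof (dpath_tail _ _ _ _ _ Hn ltac:(eassumption) e He'). destruct Hn as [_ [Hlt _]].
  destruct (Hlt _ _ H). lia.
Qed.

Section Core.
Variables (Ev : list edge) (Ps : list path) (D : (edge -> R) -> (path -> R) -> Prop)
  (Gj : edge -> (edge -> R) -> (path -> R) -> R)
  (da : edge -> (edge -> R) -> (path -> R) -> edge -> R)
  (db : edge -> (edge -> R) -> (path -> R) -> path -> R) (pi : path -> R).
Hypothesis Hnd : NoDup Ev.
Hypothesis HC1 : forall j, In j Ev -> C1_on Ev Ps D (fun f pi => Gj j f pi) (da j) (db j).
Hypothesis Hcoop : forall j e, In j Ev -> In e Ev -> j <> e -> forall f, D f pi -> 0 <= da j f pi e.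
Hypothesis Hsum : forall f, D f pi -> sumR Ev (fun j => Gj j f pi) = 1.
Hypothesis Hpush : forall f, D f pi -> forall e, In e Ev -> exists s0, 0 < s0 /\
  forall s, 0 < s <= s0 -> D (fun e' => f e' + (if edge_eqb e' e then s else 0)) pi.

Lemma sumR_Ps_zero (g : path -> R) : sumR Ps (fun p => g p * (pi p - pi p)) = 0.
Proof. rewrite (sumR_ext_in _ _ (fun _ => 0)). apply sumR_zero. intros; ring. Qed.
Lemma sumR_Ps_zero' : sumR Ps (fun p => Rabs (pi p - pi p)) = 0.
Proof. rewrite (sumR_ext_in _ _ (fun _ => 0)). apply sumR_zero. intros. rewrite Rminus_diag, Rabs_R0; auto. Qed.

Lemma colsum0 f e : D f pi -> In e Ev -> sumR Ev (fun j => da j f pi e) = 0.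
Proof.
  intros Hf He. set (A := sumR Ev (fun j => da j f pi e)). set (N := INR (length Ev)).
  assert (HN : 0 <= N) by apply pos_INR.
  assert (K : forall eps, 0 < eps -> Rabs A <= N * eps).
  { intros eps Heps.
    destruct (fin_delta Ev (fun j d => forall f' pi', D f' pi' -> dist Ev Ps f pi f' pi' < d ->
       Rabs (Gj j f' pi' - Gj j f pi - lin Ev Ps (da j f pi) (db j f pi) f pi f' pi')
         <= eps * dist Ev Ps f pi f' pi')) as [del [Hdel Hq]].
    { intros a d d' Hd Q f' pi' H1 H2. apply Q; auto. lra. }
    { intros j Hj. destruct (HC1 j Hj) as [H1 _]. apply (H1 f pi Hf eps Heps). }
    destruct (Hpush f Hf e He) as [s0 [Hs0 Hp]].
    set (s := Rmin s0 (del / 2)).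
    assert (Hs : 0 < s) by (apply Rmin_glb_lt; lra).
    assert (Hs1 : s <= s0) by apply Rmin_l.
    assert (Hs2 : s <= del / 2) by apply Rmin_r.
    set (f' := fun e' => f e' + (if edge_eqb e' e then s else 0)).
    assert (Hf' : D f' pi) by (apply Hp; lra).
    assert (Hdist : dist Ev Ps f pi f' pi = s).
    { unfold dist. rewrite sumR_Ps_zero'.
      rewrite (sumR_ext_in _ _ (fun e' => if edge_eqb e' e then s else 0)).
      rewrite sumR_single; auto. lra.
      intros a _. unfold f'. destruct (edge_eqb a e). replace (f a + s - f a) with s by ring.
      apply Rabs_right; lra. replace (f a + 0 - f a) with 0 by ring. apply Rabs_R0. }
    assert (Hlin : forall j, lin Ev Ps (da j f pi) (db j f pi) f pi f' pi = da j f pi e * s).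
    { intros j. unfold lin. rewrite sumR_Ps_zero.
      rewrite (sumR_ext_in _ _ (fun e' => if edge_eqb e' e then da j f pi e * s else 0)).
      rewrite sumR_single; auto. lra.
      intros a _. unfold f'. destruct (edge_eqb a e) eqn:Eq. apply edge_eqb_spec in Eq; subst. ring. ring. }
    assert (Hj : forall j, In j Ev -> Rabs (Gj j f' pi - Gj j f pi - da j f pi e * s) <= eps * s).
    { intros j Hj. rewrite <- Hlin, <- Hdist. apply Hq; auto. rewrite Hdist. lra. }
    assert (Hsumd : sumR Ev (fun j => Gj j f' pi - Gj j f pi - da j f pi e * s) = - (s * A)).
    { rewrite !sumR_minus. rewrite (Hsum f' Hf'), (Hsum f Hf).
      rewrite (sumR_ext_in _ (fun j => da j f pi e * s) (fun j => s * da j f pi e)) by (intros; ring).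
      rewrite sumR_scal. unfold A. ring. }
    assert (Rabs (s * A) <= N * eps * s).
    { rewrite <- Rabs_Ropp, <- Hsumd. eapply Rle_trans; [apply sumR_abs|].
      eapply Rle_trans; [apply sumR_le_in; exact Hj|]. rewrite sumR_const. unfold N. lra. }
    rewrite Rabs_mult, (Rabs_right s) in H by lra.
    apply (Rmult_le_reg_l s); lra. }
  destruct (Req_dec A 0) as [|Hne]; auto.
  pose proof (Rabs_pos_lt A Hne).
  pose proof (K (Rabs A / (2 * (N + 1))) ltac:(apply Rdiv_lt_0_compat; lra)).
  exfalso. assert (N * (Rabs A / (2 * (N + 1))) < Rabs A); [|lra].
  unfold Rdiv. rewrite <- Rmult_assoc. apply (Rmult_lt_reg_r (2 * (N+1))). lra.
  rewrite Rmult_assoc, Rinv_l by lra. nra.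
Qed.

Lemma Dt_nonpos f (d : edge -> R) : D f pi ->
  sumR Ev (fun j => sgn (d j) * sumR Ev (fun e => da j f pi e * d e)) <= 0.
Proof.
  intros Hf.
  rewrite (sumR_ext_in _ _ (fun j => sumR Ev (fun e => sgn (d j) * da j f pi e * d e))).
  2:{ intros j _. rewrite <- sumR_scal. apply sumR_ext_in. intros; ring. }
  rewrite sumR_swap.
  rewrite <- (sumR_zero Ev). apply sumR_le_in. intros e He.
  destruct (Req_dec (d e) 0) as [Hz|Hnz].
  - rewrite (sumR_ext_in _ _ (fun _ => 0)). rewrite sumR_zero; lra. intros. rewrite Hz. ring.
  - eapply Rle_trans with (sumR Ev (fun j => Rabs (d e) * da j f pi e)).
    + apply sumR_le_in. intros j Hj. rewrite (sgn_dec (d e)) at 1.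
      destruct (edge_eqb j e) eqn:Eq.
      * apply edge_eqb_spec in Eq. subst j. pose proof (sgn_sq _ Hnz).
        replace (sgn (d e) * da e f pi e * (Rabs (d e) * sgn (d e))) with
          (Rabs (d e) * da e f pi e * (sgn (d e) * sgn (d e))) by ring. rewrite H. lra.
      * assert (j <> e) by (intro; subst; assert (edge_eqb e e = true) by (apply edge_eqb_spec; auto); congruence).
        pose proof (Hcoop j e Hj He H f Hf). pose proof (sgn_bounds (d j)). pose proof (sgn_bounds (d e)).
        pose proof (Rabs_pos (d e)).
        replace (sgn (d j) * da j f pi e * (Rabs (d e) * sgn (d e))) with
          ((Rabs (d e) * da j f pi e) * (sgn (d j) * sgn (d e))) by ring.
        assert (sgn (d j) * sgn (d e) <= 1) by nra.
        assert (0 <= Rabs (d e) * da j f pi e) by nra. nra.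
    + rewrite sumR_scal. rewrite (colsum0 f e Hf He). lra.
Qed.

Definition Pt (x y : edge -> R) (t : R) : edge -> R := fun e => y e + t * (x e - y e).

Lemma seg_main (x y : edge -> R) :
  (forall t, 0 <= t <= 1 -> D (Pt x y t) pi) ->
  sumR Ev (fun j => sgn (x j - y j) * (Gj j (Pt x y 1) pi - Gj j (Pt x y 0) pi)) <= 0.
Proof.
  intros Hseg.
  set (phi := fun t => sumR Ev (fun j => sgn (x j - y j) * Gj j (Pt x y t) pi)).
  assert (Heq : sumR Ev (fun j => sgn (x j - y j) * (Gj j (Pt x y 1) pi - Gj j (Pt x y 0) pi)) = phi 1 - phi 0).
  { unfold phi. rewrite <- sumR_minus. apply sumR_ext_in. intros; ring. }
  rewrite Heq. cut (phi 1 <= phi 0). lra.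
  apply creep. intros t Ht eps Heps.
  set (Dsum := sumR Ev (fun e => Rabs (x e - y e))).
  assert (HD : 0 <= Dsum) by (apply sumR_nonneg; intros; apply Rabs_pos).
  set (N := INR (length Ev)). assert (HN : 0 <= N) by apply pos_INR.
  set (eps' := eps / (N * Dsum + 1)).
  assert (He' : 0 < eps') by (apply Rdiv_lt_0_compat; nra).
  destruct (fin_delta Ev (fun j d => forall f' pi', D f' pi' -> dist Ev Ps (Pt x y t) pi f' pi' < d ->
       Rabs (Gj j f' pi' - Gj j (Pt x y t) pi - lin Ev Ps (da j (Pt x y t) pi) (db j (Pt x y t) pi) (Pt x y t) pi f' pi')
         <= eps' * dist Ev Ps (Pt x y t) pi f' pi')) as [del [Hdel Hq]].
  { intros a d d' Hd Q f' pi' H1 H2. apply Q; auto. lra. }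
  { intros j Hj. destruct (HC1 j Hj) as [H1 _]. apply (H1 _ pi (Hseg t Ht) eps' He'). }
  exists (del / (Dsum + 1)). split. apply Rdiv_lt_0_compat; lra.
  intros s Hs Hst.
  set (l := fun j => sumR Ev (fun e => da j (Pt x y t) pi e * (x e - y e))).
  set (Dt := sumR Ev (fun j => sgn (x j - y j) * l j)).
  assert (HDt : Dt <= 0) by (apply Dt_nonpos; apply Hseg; auto).
  assert (Hdist : dist Ev Ps (Pt x y t) pi (Pt x y s) pi = Rabs (s - t) * Dsum).
  { unfold dist. rewrite sumR_Ps_zero'. rewrite Rplus_0_r. unfold Dsum. rewrite <- sumR_scal.
    apply sumR_ext_in. intros e _. unfold Pt. rewrite <- Rabs_mult. f_equal. ring. }
  assert (Hlin : forall j, lin Ev Ps (da j (Pt x y t) pi) (db j (Pt x y t) pi) (Pt x y t) pi (Pt x y s) pi = (s - t) * l j).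
  { intros j. unfold lin. rewrite sumR_Ps_zero, Rplus_0_r. unfold l. rewrite <- sumR_scal.
    apply sumR_ext_in. intros e _. unfold Pt. ring. }
  assert (Hsmall : Rabs (s - t) * Dsum < del).
  { assert (Rabs (s - t) * (Dsum + 1) < del).
    { apply (Rmult_lt_reg_r (/ (Dsum + 1))). apply Rinv_0_lt_compat; lra.
      rewrite Rmult_assoc, Rinv_r by lra. lra. }
    pose proof (Rabs_pos (s - t)). nra. }
  assert (Hj : forall j, In j Ev -> Rabs (Gj j (Pt x y s) pi - Gj j (Pt x y t) pi - (s - t) * l j)
                 <= eps' * (Rabs (s - t) * Dsum)).
  { intros j Hj. rewrite <- Hlin, <- Hdist. apply Hq; auto. rewrite Hdist. auto. }
  set (Er := phi s - phi t - (s - t) * Dt).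
  assert (HEr : Er = sumR Ev (fun j => sgn (x j - y j) * (Gj j (Pt x y s) pi - Gj j (Pt x y t) pi - (s - t) * l j))).
  { unfold Er, phi, Dt. rewrite <- sumR_scal. rewrite <- !sumR_minus. apply sumR_ext_in. intros; ring. }
  assert (Hbound : Rabs Er <= eps * Rabs (s - t)).
  { rewrite HEr. eapply Rle_trans; [apply sumR_abs|].
    eapply Rle_trans with (sumR Ev (fun _ => eps' * (Rabs (s - t) * Dsum))).
    - apply sumR_le_in. intros j Hjj. rewrite Rabs_mult.
      pose proof (sgn_abs (x j - y j)). pose proof (Hj j Hjj).
      pose proof (Rabs_pos (Gj j (Pt x y s) pi - Gj j (Pt x y t) pi - (s - t) * l j)). nra.
    - rewrite sumR_const. fold N.
      assert (N * eps' * Dsum <= eps).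
      { unfold eps'. unfold Rdiv. replace (N * (eps * / (N * Dsum + 1)) * Dsum) with
          (eps * ((N * Dsum) * / (N * Dsum + 1))) by ring.
        assert ((N * Dsum) * / (N * Dsum + 1) <= 1).
        { apply (Rmult_le_reg_r (N * Dsum + 1)). nra. rewrite Rmult_assoc, Rinv_l by nra. nra. }
        nra. }
      pose proof (Rabs_pos (s - t)). nra. }
  split; intros Hts.
  - rewrite (Rabs_right (s - t)) in Hbound by lra.
    pose proof (Rle_abs Er). assert ((s - t) * Dt <= 0) by nra. unfold Er in *. lra.
  - rewrite (Rabs_left1 (s - t)) in Hbound by lra.
    pose proof (Rle_abs (- Er)); rewrite Rabs_Ropp in H. assert ((s - t) * Dt >= 0) by nra. unfold Er in *. lra.
Qed.
End Core.

Lemma flow_nonneg E C Ps pi e : in_Pi E C Ps pi -> 0 <= flow Ps pi e.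
Proof. intros [_ [Hp _]]. unfold flow. apply sumR_nonneg. intros p Hin.
  destruct (existsb _ _); [apply Hp; auto| lra]. Qed.

Theorem lemma2 (n : nat) (E : list edge) (C : edge -> option R) (Ps : list path)
    (G : Gmap)
    (Hnet : network n E) (Hcap : cap_pos E C) (HPs : paths_enum n E Ps)
    (Hloc : G_local n E G) (Hsimp : G_simplex n E C Ps G)
    (Hcons : G_consistent n E C Ps G) (Hcoop : G_C1_coop n E C Ps G) :
  forall v, (v < n)%nat ->
  forall pi, in_Pi E C Ps pi ->
  forall f, in_F E C f ->
    sumR (out_edges E v) (fun e => sgn (f e - flow Ps pi e) * H E G v f pi e)
      <= - Vplus E Ps v f pi + Vminus E Ps v f pi.
Proof.
  intros v Hv pi Hpi f Hf.
  set (L := out_edges E v). set (y := flow Ps pi).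
  assert (HndL : NoDup L) by (apply NoDup_filter; apply (proj1 Hnet)).
  assert (HLE : forall e, In e L -> In e E) by (intros e He; apply filter_In in He; tauto).
  assert (Hy : in_Fv E C v y).
  { intros e He. split. apply (flow_nonneg E C). auto. apply (proj2 (proj2 (proj2 Hpi))). auto. }
  assert (HfV : in_Fv E C v f) by (intros e He; apply Hf; auto).
  destruct (Hcoop v Hv) as [da [db [HC1 Hco]]].
  pose proof (seg_main L Ps (fun f pi => in_Fv E C v f /\ in_Pi E C Ps pi)
     (fun j f pi => G v f pi j) da db pi HndL HC1) as Hmain.
  specialize (Hmain ltac:(intros j e Hj He Hne g [Hg _]; apply (Hco j e Hj He Hne g pi Hg Hpi))).
  specialize (Hmain ltac:(intros g [Hg Hp]; apply (Hsimp v Hv g pi Hg Hp))).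
  assert (Hpush : forall g, in_Fv E C v g /\ in_Pi E C Ps pi -> forall e, In e L -> exists s0, 0 < s0 /\ forall s, 0 < s <= s0 -> in_Fv E C v (fun e' => g e' + (if edge_eqb e' e then s else 0)) /\ in_Pi E C Ps pi).
  { intros g [Hg Hp] e He. exists (match C e with Some c => (c - g e) / 2 | None => 1 end).
      destruct (Hg e He) as [Hg0 Hgc]. split.
      { destruct (C e); simpl in Hgc; lra. }
      intros s Hs. split; auto. intros e' He'. destruct (Hg e' He') as [H1 H2].
      destruct (edge_eqb e' e) eqn:Eq.
      + apply edge_eqb_spec in Eq; subst e'. split. lra.
        destruct (C e); simpl in *; lra.
      + rewrite Rplus_0_r. auto. }
  specialize (Hmain Hpush f y).
  assert (K : sumR L (fun j => sgn (f j - y j) * (G v f pi j - G v y pi j)) <= 0).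
  { eapply Rle_trans; [|apply Hmain].
    - right. apply sumR_ext_in. intros j _. f_equal. f_equal; apply Hloc; auto; intros; unfold Pt; ring.
    - intros t Ht. split; auto. intros e He. destruct (Hy e He) as [Hy0 Hyc]. destruct (HfV e He) as [Hf0 Hfc].
      unfold Pt. split.
      + assert (0 <= (1 - t) * y e) by (apply Rmult_le_pos; lra).
        assert (0 <= t * f e) by (apply Rmult_le_pos; lra). lra.
      + destruct (C e) as [c|]; simpl in *; auto.
        assert (0 <= (1 - t) * (c - y e)) by (apply Rmult_le_pos; lra).
        assert (0 <= t * (c - f e)) by (apply Rmult_le_pos; lra).
        destruct (Req_dec t 0). subst t. lra.
        assert (0 < t * (c - f e)) by (apply Rmult_lt_0_compat; lra). lra. }
  clear Hmain.
  set (lp := sumR L y).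
  assert (Hc : forall e, In e L -> y e = lp * G v y pi e).
  { intros e He. symmetry. apply (Hcons v Hv pi Hpi e He). }
  destruct (Hsimp v Hv y pi Hy Hpi) as [Gy0 Gy1].
  assert (HVp : Vplus E Ps v f pi = sumR L (fun e => sgn (f e - y e) * (f e - y e))).
  { unfold Vplus. apply sumR_ext_in. intros. rewrite sgn_mul. auto. }
  rewrite HVp. unfold H, Vminus. fold L. fold y.
  destruct (Nat.eqb v 0) eqn:Ev0.
  - apply Nat.eqb_eq in Ev0. subst v.
    assert (Hl1 : lp = 1) by (apply (out0_sum n E C Ps pi); auto).
    rewrite (sumR_ext_in _ _ (fun e => sgn (f e - y e) * (G 0%nat f pi e - G 0%nat y pi e)
        - sgn (f e - y e) * (f e - y e))).
    rewrite sumR_minus. lra.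
    intros e He. set (sg := sgn (f e - y e)). rewrite (Hc e He), Hl1. ring.
  - set (lm := sumR (in_edges E v) f).
    assert (Hlm : 0 <= lm).
    { apply sumR_nonneg. intros e He. apply filter_In in He. apply Hf. tauto. }
    set (S := sumR L (fun e => sgn (f e - y e) * G v y pi e)).
    assert (HS : Rabs S <= 1).
    { rewrite <- Gy1. eapply Rle_trans; [apply sumR_abs|]. apply sumR_le_in. intros e He.
      rewrite Rabs_mult. pose proof (sgn_abs (f e - y e)). pose proof (Gy0 e He).
      rewrite (Rabs_right (G v y pi e)) by lra. pose proof (Rabs_pos (sgn (f e - y e))). nra. }
    rewrite (sumR_ext_in _ _ (fun e => lm * (sgn (f e - y e) * (G v f pi e - G v y pi e))
        + (lm - lp) * (sgn (f e - y e) * G v y pi e) - sgn (f e - y e) * (f e - y e))).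
    rewrite sumR_minus, sumR_plus, !sumR_scal. fold S. fold lp.
    assert ((lm - lp) * S <= Rabs (lp - lm)).
    { rewrite Rabs_minus_sym. eapply Rle_trans; [apply Rle_abs|]. rewrite Rabs_mult.
      pose proof (Rabs_pos (lm - lp)). nra. }
    assert (lm * sumR L (fun e => sgn (f e - y e) * (G v f pi e - G v y pi e)) <= 0) by nra.
    lra.
    intros e He. set (sg := sgn (f e - y e)). rewrite (Hc e He). ring.
Qed.
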